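(* Let $\mathbf{A}\in\mathbb{K}[X]^{m\times m}$ be nonsingular, $\mathbf{s}\in\mathbb{Z}^m$, and $\sigma\in\mathbb{N}$ with $\sigma>\deg(\det\mathbf{A})$. Let $\pi$ be a permutation of $\{1,\dots,m\}$ such that $\hat{\mathbf{s}}=(s_{\pi(1)},\dots,s_{\pi(m)})$ is non-decreasing; define $\hat{\mathbf{t}}$ by $\hat t_1=0$ and, for $2\le i\le m$, $\hat t_i-\hat t_{i-1}=\sigma$ if $\hat s_i-\hat s_{i-1}\ge\sigma$ and $\hat t_i-\hat t_{i-1}=\hat s_i-\hat s_{i-1}$ otherwise; and let $\mathbf{t}=(\hat t_{\pi^{-1}(1)},\dots,\hat t_{\pi^{-1}(m)})$. Then $\mathbf{t}\in\mathbb{N}^m$, $\min(\mathbf{t})=0$, $\max(\mathbf{t})\le(m-1)\sigma$, $t_1+\cdots+t_m\le m^2\sigma/2$, and the $\mathbf{s}$-Popov form of $\mathbf{A}$ is also in $\mathbf{t}$-Popov form.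
   Context: For $\mathbf{s}\in\mathbb{Z}^m$ and nonzero $\mathbf{p}=[p_j]\in\mathbb{K}[X]^{1\times m}$, the $\mathbf{s}$-degree of $\mathbf{p}$ is $\max_j(\deg p_j+s_j)$ and its $\mathbf{s}$-pivot index is the largest $j$ attaining it, with $p_j$ its pivot entry. A nonsingular matrix is in $\mathbf{s}$-Popov form if its $\mathbf{s}$-pivot entries are monic and on its diagonal and in each column the nonpivot entries have degree less than the pivot entry. The $\mathbf{s}$-Popov form of $\mathbf{A}$ is the unique matrix in $\mathbf{s}$-Popov form that is left-unimodularly equivalent to $\mathbf{A}$. *)

(* Defs.v *)
From HB Require Import structures.
From mathcomp Require Import all_boot all_order all_algebra all_fingroup.
Set Implicit Arguments. Unset Strict Implicit. Unset Printing Implicit Defensive.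
Import Order.TTheory GRing.Theory Num.Theory.
Local Open Scope ring_scope.

(* Indices are 0-based: 'I_m = {0,...,m-1} stands for {1,...,m}. *)

(* degree of a polynomial, as an integer (only used for nonzero p) *)
Definition pdeg (K : fieldType) (p : {poly K}) : int := (size p)%:Z - 1.

(* j is the s-pivot index of the nonzero row p: among nonzero entries,
   deg p_j + s_j is maximal (= the s-degree of p), and j is the largest
   index attaining it. *)
Definition is_spivot (K : fieldType) (m : nat) (s : 'I_m -> int)
    (p : 'I_m -> {poly K}) (j : 'I_m) : Prop :=
  p j != 0 /\
  forall k : 'I_m, p k != 0 ->
    pdeg (p k) + s k <= pdeg (p j) + s j /\
    ((j < k)%N -> pdeg (p k) + s k < pdeg (p j) + s j).

Definition is_sPopov (K : fieldType) (m : nat) (s : 'I_m -> int)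
    (P : 'M[{poly K}]_m) : Prop :=
  \det P != 0 /\
  (forall i : 'I_m, is_spivot s (fun j => P i j) i /\ P i i \is monic) /\
  (forall i j : 'I_m, i != j -> (size (P i j) < size (P j j))%N).

Definition left_unimod_equiv (K : fieldType) (m : nat)
    (A P : 'M[{poly K}]_m) : Prop :=
  exists U : 'M[{poly K}]_m, U \in unitmx /\ P = U *m A.

(* hat s_k = s_{pi(k)} for k < m (default 0 otherwise, never used) *)
Definition shat (m : nat) (s : 'I_m -> int) (pi : 'S_m) (k : nat) : int :=
  match insub k with Some i => s (pi i) | None => 0 end.

Definition that (m : nat) (s : 'I_m -> int) (pi : 'S_m) (sigma : nat)
    (k : nat) : int :=
  \sum_(1 <= l < k.+1)
     (let d := shat s pi l - shat s pi l.-1 in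
      if sigma%:Z <= d then sigma%:Z else d).

Definition tshift (m : nat) (s : 'I_m -> int) (pi : 'S_m) (sigma : nat)
    (j : 'I_m) : int :=
  that s pi sigma (pi^-1%g j).

(* Main.v *)
Require Import Defs.
From HB Require Import structures.
From mathcomp Require Import all_boot all_order all_algebra all_fingroup.
From mathcomp Require Import zify.
Set Implicit Arguments. Unset Strict Implicit. Unset Printing Implicit Defensive.
Import Order.TTheory GRing.Theory Num.Theory.
Local Open Scope ring_scope.
Lemma det_size (K : fieldType) n (P : 'M[{poly K}]_n) :
  (forall i, P i i != 0) ->
  (forall i j, i != j -> (size (P i j) < size (P j j))%N) ->
  size (\det P) = size (\prod_i P i i).
Proof.
move=> Hd Hc.
rewrite /determinant (bigD1 1%g) //= odd_perm1 expr0 mul1r.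
have -> : \prod_i P i ((1%g:'S_n) i) = \prod_i P i i.
  by apply: eq_bigr => i _; rewrite perm1.
set N := \prod_i P i i.
have hN : N != 0 by apply/prodf_neq0 => i _.
rewrite size_polyDl //.
apply: (big_ind (fun q : {poly K} => (size q < size N)%N)).
- by rewrite size_poly0 size_poly_gt0.
- move=> x y hx hy. have := size_polyD x y => h.
  by rewrite (ssrnat.leq_ltn_trans h) // gtn_max hx hy.
move=> σ hσ.
have [j0 hj0] : exists j0, (σ^-1)%g j0 != j0.
  apply/existsP; apply: contraR hσ; rewrite negb_exists => /forallP H.
  apply/eqP/permP => j; rewrite perm1.
  by move: (H (σ j)); rewrite negbK permK => /eqP e; rewrite -e.
have key : (size (\prod_i P i (σ i))%R < size N)%N.
  rewrite (reindex_inj (h := (σ^-1)%g) (@perm_inj _ _)) /=.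
  under eq_bigr => j _ do rewrite permKV.
  have h0 : (size (\prod_j P ((σ^-1)%g j) j)%R <=
     (\sum_j size (P ((σ^-1)%g j) j)).+1 - n)%N.
    by have := size_poly_prod_leq predT (fun j => P ((σ^-1)%g j) j); rewrite card_ord.
  rewrite (ssrnat.leq_ltn_trans h0) //.
  rewrite /N size_prod // card_ord.
  have h1 : (\sum_j size (P ((σ^-1)%g j) j) < \sum_j size (P j j))%N.
    rewrite (bigD1 j0) //= [X in (_ < X)%N](bigD1 j0) //=.
    rewrite -addSn leq_add //; first exact: Hc.
    apply: leq_sum => j _; case: (eqVneq ((σ^-1)%g j) j) => [->//|h].
    exact: ltnW (Hc _ _ h).
  have h2 : (n <= \sum_j size (P j j))%N.
    rewrite -[X in (X <= _)%N]card_ord -sum1_card; apply: leq_sum => j _; by rewrite size_poly_gt0.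
  by apply: ltn_sub2r; rewrite ltnS.
by rewrite mulr_sign; case: ifP => _; rewrite ?size_polyN.
Qed.

Definition dlt (m : nat) (s : 'I_m -> int) (pi : 'S_m) (sigma : nat) (l : nat) : int :=
  let d := shat s pi l - shat s pi l.-1 in
  if sigma%:Z <= d then sigma%:Z else d.

Lemma that0 m (s : 'I_m -> int) (pi : 'S_m) sigma : that s pi sigma 0 = 0.
Proof. by rewrite /that big_geq. Qed.

Lemma thatS m (s : 'I_m -> int) (pi : 'S_m) sigma n :
  that s pi sigma n.+1 = that s pi sigma n + dlt s pi sigma n.+1.
Proof. by rewrite /that big_nat_recr. Qed.

Lemma shat_mono m (s : 'I_m -> int) (pi : 'S_m) :
  (forall i j : 'I_m, (i <= j)%N -> s (pi i) <= s (pi j)) ->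
  forall a b, (a <= b)%N -> (b < m)%N -> shat s pi a <= shat s pi b.
Proof.
move=> H a b ab bm; have am : (a < m)%N by apply: leq_ltn_trans bm.
rewrite /shat; case: insubP => [i _ ei|]; last by rewrite am.
case: insubP => [j _ ej|]; last by rewrite bm.
by apply: H; rewrite ei ej.
Qed.

Lemma shat_val m (s : 'I_m -> int) (pi : 'S_m) (j : 'I_m) :
  shat s pi (pi^-1 j)%g = s j.
Proof.
rewrite /shat; case: insubP => [i _ ei|]; last by rewrite ltn_ord.
have -> : i = ((pi^-1)%g j) by apply: val_inj.
by rewrite permKV.

Qed.

Lemma dlt_le m (s : 'I_m -> int) (pi : 'S_m) sigma l : dlt s pi sigma l <= sigma%:Z.
Proof. rewrite /dlt; case: ifP => // /negbT; rewrite -ltNge; exact: ltW. Qed.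

Lemma that_le m (s : 'I_m -> int) (pi : 'S_m) sigma n : that s pi sigma n <= (n * sigma)%:Z.
Proof.
elim: n => [|n IH]; first by rewrite that0.
rewrite thatS mulSn PoszD addrC lerD //; exact: dlt_le.
Qed.

Lemma tdiff m (s : 'I_m -> int) (pi : 'S_m) sigma :
  (forall i j : 'I_m, (i <= j)%N -> s (pi i) <= s (pi j)) ->
  forall a n, (a + n < m)%N ->
  let D := that s pi sigma (a + n) - that s pi sigma a in
  let E := shat s pi (a + n) - shat s pi a in
  0 <= D /\ D <= E /\ (D = E \/ sigma%:Z <= D).
Proof.
move=> H a; elim => [|n IH] hn /=.
  by rewrite addn0 subrr; lia.
have hn' : (a + n < m)%N by lia.
move: (IH hn') => /= [h1 [h2 h3]].
have hm := shat_mono H (leqnSn (a + n)) (etrans (esym (f_equal (fun x => (x < m)%N) (addnS a n))) hn).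
rewrite addnS thatS /dlt /=.
case: ifP => hs; lia.
Qed.

Lemma tdiff2 m (s : 'I_m -> int) (pi : 'S_m) sigma :
  (forall i j : 'I_m, (i <= j)%N -> s (pi i) <= s (pi j)) ->
  forall j k : 'I_m, ((pi^-1)%g j <= (pi^-1)%g k)%N ->
  0 <= tshift s pi sigma k - tshift s pi sigma j /\
  tshift s pi sigma k - tshift s pi sigma j <= s k - s j /\
  (tshift s pi sigma k - tshift s pi sigma j = s k - s j \/
   sigma%:Z <= tshift s pi sigma k - tshift s pi sigma j).
Proof.
move=> H j k jk.
have := @tdiff m s pi sigma H ((pi^-1)%g j) ((pi^-1)%g k - (pi^-1)%g j).
rewrite subnKC // => /(_ (ltn_ord _)) /=.
by rewrite !shat_val.
Qed.

Lemma sum_that m (s : 'I_m -> int) (pi : 'S_m) sigma n :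
  2%:Z * (\sum_(a < n) that s pi sigma a) <= (n ^ 2 * sigma)%:Z.
Proof.
elim: n => [|n IH]; first by rewrite big_ord0 mulr0.
rewrite big_ord_recr /=.
have h := that_le s pi sigma n.
have e : (n.+1 ^ 2 * sigma = n ^ 2 * sigma + 2 * (n * sigma) + sigma)%N.
  by rewrite !expnS !expn0; nia.
rewrite e. move: IH; set S := (\sum_(i < n) _). move=> IH. lia.
Qed.

Theorem mainTheorem12 (K : fieldType) (m : nat) (A : 'M[{poly K}]_m)
    (s : 'I_m -> int) (sigma : nat) (pi : 'S_m) :
  (0 < m)%N ->
  \det A != 0 ->
  ((size (\det A)).-1 < sigma)%N ->
  (forall i j : 'I_m, (i <= j)%N -> s (pi i) <= s (pi j)) ->
  let t := tshift s pi sigma in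
  (forall j, 0 <= t j) /\
  (exists j, t j = 0) /\
  (forall j, t j <= ((m - 1) * sigma)%:Z) /\
  2%:Z * (\sum_(j < m) t j) <= (m ^ 2 * sigma)%:Z /\
  (forall P : 'M[{poly K}]_m,
     is_sPopov s P -> left_unimod_equiv A P -> is_sPopov t P).
Proof.
move=> m0 dA hdeg H t.
have t0 : forall j, 0 <= t j.
  move=> j; have := @tdiff m s pi sigma H 0 ((pi^-1)%g j) (ltn_ord _).
  by rewrite /= add0n that0 subr0 => -[].
split; first exact: t0.
split.
  exists (pi (Ordinal m0)); by rewrite /t /tshift permK that0.
split.
  move=> j; apply: (le_trans (that_le _ _ _ _)).
  rewrite lez_nat leq_mul2r; apply/orP; right.
  have := ltn_ord ((pi^-1)%g j); lia.
split.
  have -> : \sum_(j < m) t j = \sum_(a < m) that s pi sigma a.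
    rewrite (reindex_inj (h := pi) (@perm_inj _ _)) /=.
    by apply: eq_bigr => j _; rewrite /t /tshift permK.
  exact: sum_that.
move=> P [dP [piv col]] [U [hU eP]].
have sdet : size (\det P) = size (\det A).
  rewrite eP det_mulmx; move: hU; rewrite unitmxE poly_unitE => /andP [/eqP s1 _].
  have u0 : \det U != 0 by rewrite -size_poly_gt0 s1.
  by rewrite size_mul // s1.
have dnz : forall i, P i i != 0 by move=> i; case: (piv i) => -[].
have hsz : forall j, (size (P j j) <= sigma)%N.
  move=> j.
  have : (size (P j j) <= size (\det P))%N.
    rewrite (det_size dnz col) (bigD1 j) //= size_mul //; last first.
      by apply/prodf_neq0 => i _.
    have : (0 < size (\prod_(i | i != j) P i i)%R)%N.
      by rewrite size_poly_gt0; apply/prodf_neq0 => i _.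
    by move=> h; rewrite -subn1 -addnBA ?leq_addr.
  rewrite sdet; lia.
have hsz2 : forall i k, (size (P i k) <= sigma)%N.
  move=> i k; case: (eqVneq i k) => [->|ik]; first exact: hsz.
  exact: ltnW (leq_trans (col _ _ ik) (hsz k)).
split; first exact: dP.
split; last exact: col.
move=> i; case: (piv i) => -[pii hpiv] mon; split=> //; split=> // k hk.
move: (hpiv k hk) => [h1 h2].
have a1 := hsz2 i k; have a2 := hsz2 i i.
have b1 : (0 < size (P i k))%N by rewrite size_poly_gt0.
have b2 : (0 < size (P i i))%N by rewrite size_poly_gt0.
move: h1 h2; rewrite /pdeg /t => h1 h2.
case: (leqP ((pi^-1)%g i) ((pi^-1)%g k)) => c.
  have [d1 [d2 d3]] := tdiff2 sigma H c.
  split; first lia.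
  move=> ik; have := h2 ik; lia.
have [d1 [d2 d3]] := tdiff2 sigma H (ltnW c).
split; first lia.
move=> ik; have := h2 ik; lia.
Qed.
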